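(* For each of the following tableaux $D$ (listed by rows) and vector spaces $W$, the map $\rho(D)$ defined below is nonzero: $D_1$ with rows $(1,1,1,2,2,3,3)$, $(2)$, $(3)$ and $\dim W=7$; $D_2$ with rows $(1,1,1,2,2,3,3,4)$, $(2,4,4)$, $(3)$ and $\dim W=8$; $D_3$ with rows $(1,1,1,2,2,3,3,4,4)$, $(2)$, $(3)$, $(4)$ and $\dim W=9$; $D_4$ with rows $(1,1,1,2,2,3,3,4,5)$, $(2,4,4,5)$, $(3,5)$ and $\dim W=9$.
   Context: $K$ is an algebraically closed field of characteristic zero. A numbering scheme $D$ is a Young tableau with $3d$ boxes filled with $1,\dots,d$, each number occurring exactly three times, weakly increasing along rows and strictly increasing down columns. Let its rows have lengths $\ell_1,\dots,\ell_r$ and let $e_{i,s}$ be the number of entries equal to $s$ in row $i$ (so $\sum_i e_{i,s}=3$). The map $\rho(D):\Lambda^{\ell_1}W\otimes\cdots\otimes\Lambda^{\ell_r}W\to S^d(\Lambda^3W)$ is the composition of: (a) for each $i$, the comultiplication $\Lambda^{\ell_i}W\to\Lambda^{e_{i,1}}W\otimes\cdots\otimes\Lambda^{e_{i,d}}W$; (b) after rearranging factors, for each $s$ the multiplication $\Lambda^{e_{1,s}}W\otimes\cdots\otimes\Lambda^{e_{r,s}}W\to\Lambda^3W$, tensored over $s=1,\dots,d$ to land in $(\Lambda^3W)^{\otimes d}$; (c) the symmetrization $(\Lambda^3W)^{\otimes d}\to S^d(\Lambda^3W)$. *)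

(* Defs.v *)
From HB Require Import structures.
From mathcomp Require Import all_boot all_order all_algebra.
From mathcomp Require Import mpoly.

Set Implicit Arguments.
Unset Strict Implicit.
Unset Printing Implicit Defensive.

Import Order.TTheory GRing.Theory.
Local Open Scope ring_scope.

(* W = K^n with standard basis e_0,...,e_{n-1}.  Lambda W has basis
   e_A = e_{a_1} /\ ... /\ e_{a_k} (a_1 < ... < a_k) for A : {set 'I_n}.  *)

Section Rho.
Variable K : fieldType.
Variable n : nat.

Definition wedge_inv (m : nat) (C : 'I_m -> {set 'I_n}) : nat :=
  (\sum_(j < m) \sum_(k < m | (j < k)%N)
     #|[set p : 'I_n * 'I_n | [&& p.1 \in C j, p.2 \in C k & (p.2 < p.1)%N]]|)%N.

(* coefficient of e_T in the wedge product e_{C_0} /\ e_{C_1} /\ ... /\ e_{C_{m-1}} *)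
Definition wcoef (m : nat) (C : 'I_m -> {set 'I_n}) (T : {set 'I_n}) : K :=
  if [forall j : 'I_m, forall k : 'I_m, (j != k) ==> [disjoint C j & C k]]
     && (\bigcup_(j < m) C j == T)
  then (-1) ^+ wedge_inv C else 0.

(* coefficient of e_{B_0} (x) ... (x) e_{B_{d-1}} in the comultiplication
   Lambda^l W -> Lambda^{e_0} W (x) ... (x) Lambda^{e_{d-1}} W applied to e_A:
   the signed sum over shuffles, i.e. the coefficient of e_A in
   e_{B_0} /\ ... /\ e_{B_{d-1}}, restricted to the prescribed block sizes. *)
Definition comult_coef (d : nat) (e : 'I_d -> nat)
    (A : {set 'I_n}) (B : 'I_d -> {set 'I_n}) : K :=
  if [forall s : 'I_d, #|B s| == e s] then wcoef B A else 0.

(* variables of the symmetric algebra S(Lambda W) = polynomial ring on the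
   basis {e_T}; we index variables by all subsets, S(Lambda^3 W) is the
   subring generated by the variables with #|T| = 3. *)
Definition NV := #|{set 'I_n}|.
Definition Sym := {mpoly K[NV]}.
Definition var (T : {set 'I_n}) : Sym := 'X_(enum_rank T).

Section Tableau.
(* D given by its rows; entries 1..d *)
Variable D : seq (seq nat).
Definition nrows : nat := size D.
Definition dd : nat := (sumn (map size D) %/ 3)%N.
Definition row (i : 'I_nrows) : seq nat := nth [::] D i.
Definition rowlen (i : 'I_nrows) : nat := size (row i).
(* e_{i,s}: number of entries s+1 in row i (entries are 1-indexed) *)
Definition ecount (i : 'I_nrows) (s : 'I_dd) : nat := count_mem s.+1 (row i).

(* tensors in Lambda W^{(x) r}, written in the basis e_{A_0} (x) ... (x) e_{A_{r-1}} *)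
Definition tensorIn := {ffun {ffun 'I_nrows -> {set 'I_n}} -> K}.

(* step (a): apply comultiplication to each factor;
   result in (x)_i (x)_s Lambda^{e_{i,s}} W *)
Definition stepA (t : tensorIn) : {ffun {ffun 'I_nrows -> {ffun 'I_dd -> {set 'I_n}}} -> K} :=
  [ffun B : {ffun 'I_nrows -> {ffun 'I_dd -> {set 'I_n}}} => \sum_(A : {ffun 'I_nrows -> {set 'I_n}})
               t A * \prod_(i < nrows) comult_coef (ecount i) (A i) (B i)].

(* step (b): rearrange factors and, for each s, multiply
   Lambda^{e_{0,s}} (x) ... (x) Lambda^{e_{r-1,s}} -> Lambda^3 W *)
Definition stepB (c : {ffun {ffun 'I_nrows -> {ffun 'I_dd -> {set 'I_n}}} -> K})
    : {ffun {ffun 'I_dd -> {set 'I_n}} -> K} :=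
  [ffun T : {ffun 'I_dd -> {set 'I_n}} => if [forall s, #|T s| == 3%N] then
     \sum_(B : {ffun 'I_nrows -> {ffun 'I_dd -> {set 'I_n}}})
        c B * \prod_(s < dd) wcoef (fun i => B i s) (T s)
     else 0].

(* step (c): symmetrization (Lambda^3 W)^{(x) d} -> S^d(Lambda^3 W),
   e_{T_0} (x) ... (x) e_{T_{d-1}} |-> e_{T_0} ... e_{T_{d-1}} *)
Definition stepC (m : {ffun {ffun 'I_dd -> {set 'I_n}} -> K}) : Sym :=
  \sum_(T : {ffun 'I_dd -> {set 'I_n}}) m T *: \prod_(s < dd) var (T s).

Definition rho (t : tensorIn) : Sym := stepC (stepB (stepA t)).

(* t lies in Lambda^{l_0} W (x) ... (x) Lambda^{l_{r-1}} W *)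
Definition in_domain (t : tensorIn) : Prop :=
  forall A, t A != 0 -> forall i, #|A i| = rowlen i.

Definition rho_nonzero : Prop := exists t : tensorIn, in_domain t /\ rho t != 0.

End Tableau.
End Rho.

Definition D1 : seq (seq nat) := [:: [:: 1;1;1;2;2;3;3]; [:: 2]; [:: 3]]%N.
Definition D2 : seq (seq nat) := [:: [:: 1;1;1;2;2;3;3;4]; [:: 2;4;4]; [:: 3]]%N.
Definition D3 : seq (seq nat) := [:: [:: 1;1;1;2;2;3;3;4;4]; [:: 2]; [:: 3]; [:: 4]]%N.
Definition D4 : seq (seq nat) := [:: [:: 1;1;1;2;2;3;3;4;5]; [:: 2;4;4;5]; [:: 3;5]]%N.

(* Main.v *)
Require Import Defs.
From HB Require Import structures.
From mathcomp Require Import all_boot all_order all_algebra.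
From mathcomp Require Import mpoly.
Import GRing.Theory.
Local Open Scope ring_scope.
Set Implicit Arguments. Unset Strict Implicit. Unset Printing Implicit Defensive.

Fixpoint prodlist {T : Type} (L : seq (seq T)) : seq (seq T) :=
  match L with
  | [::] => [:: [::]]
  | a :: L' => [seq x :: p | x <- a, p <- prodlist L']
  end.

Lemma prodlistP (T : eqType) (x0 : T) (xs : seq T) (L : seq (seq T)) :
  reflect (size xs = size L /\ forall i, (i < size L)%N -> nth x0 xs i \in nth [::] L i)
          (xs \in prodlist L).
Proof.
elim: L xs => [|a L IH] [|x xs] /=.
- by rewrite inE eqxx; constructor; split.
- rewrite inE /=; constructor; by case.
- apply: (iffP idP); first by move/allpairsP => [[y p] [_ _ ]].
  by case.
- apply: (iffP idP).
  + move/allpairsP => [[y p] /= [ya pL [-> ->]]].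
    have [Hs Hn] := IH p pL.
    split; first by rewrite Hs.
    by case => [|i] //= Hi; apply: Hn.
  + case => [[Hs] Hn]; apply/allpairsP; exists (x, xs) => /=; split => //.
    * by have := Hn 0%N (ltn0Sn _).
    * by apply/IH; split => // i Hi; have := Hn i.+1 Hi.
Qed.

Lemma prodlist_uniq (T : eqType) (L : seq (seq T)) :
  all uniq L -> uniq (prodlist L).
Proof.
elim: L => [|a L IH] //= /andP [ua uL].
apply: allpairs_uniq => //; first exact: IH.
by move=> [x p] [y q] _ _ /= [-> ->].
Qed.

Definition sumz (s : seq int) : int := foldr (fun x y => x + y) 0 s.
Definition prodz (s : seq int) : int := foldr (fun x y => x * y) 1 s.

Lemma sumzE (K : fieldType) (s : seq int) :
  (sumz s)%:~R = \sum_(x <- s) (x%:~R : K).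
Proof. elim: s => [|x s IH]; first by rewrite big_nil mulr0z. by rewrite big_cons /= intrD IH. Qed.

Lemma prodzE (K : fieldType) (s : seq int) :
  (prodz s)%:~R = \prod_(x <- s) (x%:~R : K).
Proof. elim: s => [|x s IH]; first by rewrite big_nil mulr1z. by rewrite big_cons /= intrM IH. Qed.

Lemma sum_ord_iota (R : nmodType) m (F : nat -> R) :
  \sum_(i < m) F i = \sum_(i <- iota 0 m) F i.
Proof. by rewrite -(big_mkord xpredT) /index_iota subn0. Qed.

Lemma sumn_ord_iota m (F : nat -> nat) :
  (\sum_(i < m) F i = \sum_(i <- iota 0 m) F i)%N.
Proof. by rewrite -(big_mkord xpredT) /index_iota subn0. Qed.

Lemma prod_ord_iota (R : comPzRingType) m (F : nat -> R) :
  \prod_(i < m) F i = \prod_(i <- iota 0 m) F i.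
Proof. by rewrite -(big_mkord xpredT) /index_iota subn0. Qed.

Lemma count_sum (T : Type) (P : pred T) s : count P s = (\sum_(x <- s) P x)%N.
Proof. by elim: s => [|x s IH]; rewrite ?big_nil ?big_cons //= IH. Qed.

Lemma sumn_map_filter (T : Type) (P : pred T) (F : T -> nat) s :
  sumn [seq F x | x <- s & P x] = (\sum_(x <- s | P x) F x)%N.
Proof. by rewrite sumnE big_map big_filter. Qed.

Lemma sum_support (I : finType) (R : nmodType) (F : I -> R) (L : seq I) :
  uniq L -> (forall x, F x != 0 -> x \in L) -> \sum_x F x = \sum_(x <- L) F x.
Proof.
move=> uL HL; rewrite (big_uniq _ uL) (big_mkcond (fun x => x \in L)) /=; apply: eq_bigr => x _.
case: ifP => // xL; apply/eqP; apply: contraFT xL; exact: HL.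
Qed.

Definition zdisj (m n : nat) (P : nat -> nat -> bool) : bool :=
  all (fun j => all (fun k => (j == k) || all (fun a => ~~ (P j a && P k a)) (iota 0 n)) (iota 0 m)) (iota 0 m).
Definition zcover (m n : nat) (P : nat -> nat -> bool) (Q : nat -> bool) : bool :=
  all (fun a => has (fun j => P j a) (iota 0 m) == Q a) (iota 0 n).
Definition zinv (m n : nat) (P : nat -> nat -> bool) : nat :=
  sumn [seq sumn [seq sumn [seq count (fun b => P k b && (b < a)%N) (iota 0 n)
                              | a <- iota 0 n & P j a]
                   | k <- iota 0 m & (j < k)%N] | j <- iota 0 m].
Definition zw m n P Q : int :=
  if zdisj m n P && zcover m n P Q then (if odd (zinv m n P) then -1 else 1) else 0.

Lemma sumn_ord_iota_cond m (Pr : pred nat) (F : nat -> nat) :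
  (\sum_(i < m | Pr i) F i = \sum_(i <- iota 0 m | Pr i) F i)%N.
Proof. by rewrite -(big_mkord Pr) /index_iota subn0. Qed.

Lemma mem_iota0 a m : (a \in iota 0 m) = (a < m)%N.
Proof. by rewrite mem_iota add0n. Qed.

Lemma card_bridge n (X : {set 'I_n}) (P : nat -> bool) :
  (forall a : 'I_n, (a \in X) = P a) -> #|X| = count P (iota 0 n).
Proof.
move=> H; rewrite -sum1_card big_mkcond /= count_sum.
rewrite -(sumn_ord_iota n (fun i => nat_of_bool (P i))).
by apply: eq_bigr => i _; rewrite H.
Qed.

Section Bridge.
Variables (m n : nat) (C : 'I_m -> {set 'I_n}) (P : nat -> nat -> bool).
Hypothesis HC : forall (j : 'I_m) (a : 'I_n), (a \in C j) = P j a.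

Lemma disj_bridge :
  [forall j : 'I_m, forall k : 'I_m, (j != k) ==> [disjoint C j & C k]] = zdisj m n P.
Proof.
apply/idP/idP.
- move=> /forallP H; apply/allP => j; rewrite mem_iota0 => jm.
  apply/allP => k; rewrite mem_iota0 => km.
  case: eqP => //= jk; apply/allP => a; rewrite mem_iota0 => an.
  have := forallP (H (Ordinal jm)) (Ordinal km).
  have -> : (Ordinal jm != Ordinal km) by apply/eqP => /(congr1 val) /=.
  move=> /= Hd; apply/negP => /andP [Pj Pk].
  have := disjointFr Hd (x := Ordinal an); rewrite !HC /= Pj Pk.
  by move=> /(_ isT).
- move=> /allP H; apply/forallP => j; apply/forallP => k; apply/implyP => jk.
  have := H j; rewrite mem_iota0 ltn_ord => /(_ isT) /allP /(_ k).
  rewrite mem_iota0 ltn_ord => /(_ isT) /=.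
  have /negbTE -> : (val j != val k) by exact: jk.
  move=> /= /allP Ha; rewrite disjoint_subset; apply/subsetP => a.
  rewrite HC => Pj; rewrite inE /= HC.
  by have := Ha a; rewrite mem_iota0 ltn_ord Pj => /(_ isT).
Qed.

Lemma in_bigcup_has (a : 'I_n) :
  (a \in \bigcup_(j < m) C j) = has (fun j => P j a) (iota 0 m).
Proof.
apply/bigcupP/hasP.
- by move=> [j _]; rewrite HC => Pj; exists (val j); rewrite ?mem_iota0 ?ltn_ord.
- move=> [j]; rewrite mem_iota0 => jm Pj; exists (Ordinal jm) => //.
  by rewrite HC.
Qed.

Lemma cover_bridge (T : {set 'I_n}) (Q : nat -> bool) :
  (forall a : 'I_n, (a \in T) = Q a) ->
  (\bigcup_(j < m) C j == T) = zcover m n P Q.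
Proof.
move=> HT; apply/eqP/allP.
- move=> HU a; rewrite mem_iota0 => an; apply/eqP.
  by rewrite -[a]/(val (Ordinal an)) -HT -HU in_bigcup_has.
- move=> H; apply/setP => a; rewrite in_bigcup_has HT.
  by have := H a; rewrite mem_iota0 ltn_ord => /(_ isT) /eqP.
Qed.

Lemma inv_bridge : wedge_inv C = zinv m n P.
Proof.
rewrite /wedge_inv /zinv sumnE big_map -(sumn_ord_iota m).
apply: eq_bigr => j _.
rewrite sumn_map_filter -sumn_ord_iota_cond; apply: eq_bigr => k _.
have -> : #|[set p : 'I_n * 'I_n | [&& p.1 \in C j, p.2 \in C k & (p.2 < p.1)%N]]|
   = (\sum_(a < n) \sum_(b < n) (P j a && (P k b && (b < a)%N)))%N.
  rewrite -sum1_card big_mkcond /= pair_big /=; apply: eq_bigr => [[a b]] _.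
  by rewrite inE /= !HC.
rewrite sumn_map_filter -sumn_ord_iota_cond (big_mkcond (fun a : 'I_n => P j a)) /=.
apply: eq_bigr => a _; rewrite count_sum -(sumn_ord_iota n (fun b => nat_of_bool (P k b && (b < a)%N))).
case: (P j a) => /=; last by rewrite big1.
by [].
Qed.

Lemma wcoef_bridge (K : fieldType) (T : {set 'I_n}) (Q : nat -> bool) :
  (forall a : 'I_n, (a \in T) = Q a) -> wcoef K C T = (zw m n P Q)%:~R.
Proof.
move=> HT; rewrite /wcoef /zw disj_bridge (cover_bridge HT) inv_bridge.
case: ifP => _; last by rewrite mulr0z.
rewrite -signr_odd; case: odd => /=; last by rewrite expr0 mulr1z.
by rewrite expr1 mulrN1z.
Qed.
End Bridge.

Section Main.
Variables (K : fieldType) (n : nat) (D : seq (seq nat)) (A0l Sl : seq (seq nat)).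
Local Notation r := (nrows D).
Local Notation d := (dd D).

Definition ls (l : seq nat) : {set 'I_n} := [set a : 'I_n | val a \in l].
Definition A0 : {ffun 'I_r -> {set 'I_n}} := [ffun i : 'I_r => ls (nth [::] A0l i)].
Definition t0 : tensorIn K n D := [ffun A => (A == A0)%:R].
Definition Sset : seq {set 'I_n} := map ls Sl.
Definition vS : 'I_(NV n) -> K := fun j => ((enum_val j) \in Sset)%:R.

Definition me (i s : nat) : nat := count_mem s.+1 (nth [::] D i).
Definition Pb (lab : seq (seq nat)) (i s a : nat) : bool :=
  (a \in nth [::] A0l i) && (nth 0%N (nth [::] lab i) a == s).
Definition allowed (xs : seq (seq nat)) (i a : nat) : seq nat :=
  if a \in nth [::] A0l i then [seq s <- iota 0 d | (a \in nth [::] xs s) && (0 < me i s)%N]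
  else [:: 0%N].
Definition labs (xs : seq (seq nat)) : seq (seq (seq nat)) :=
  prodlist [seq prodlist [seq allowed xs i a | a <- iota 0 n] | i <- iota 0 r].
Definition zcom (lab : seq (seq nat)) (i : nat) : int :=
  if all (fun s => count (Pb lab i s) (iota 0 n) == me i s) (iota 0 d)
  then zw d n (fun s a => Pb lab i s a) (fun a => a \in nth [::] A0l i) else 0.
Definition zF (xs : seq (seq nat)) (lab : seq (seq nat)) : int :=
  prodz [seq zcom lab i | i <- iota 0 r] *
  prodz [seq zw r n (fun i a => Pb lab i s a) (fun a => a \in nth [::] xs s) | s <- iota 0 d].
Definition PX := prodlist (nseq d Sl).
Definition zsum : int := sumz [seq sumz [seq zF xs lab | lab <- labs xs] | xs <- PX].

Definition mkT (xs : seq (seq nat)) : {ffun 'I_d -> {set 'I_n}} := [ffun s : 'I_d => ls (nth [::] xs s)].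
Definition mkB (lab : seq (seq nat)) : {ffun 'I_r -> {ffun 'I_d -> {set 'I_n}}} :=
  [ffun i : 'I_r => [ffun s : 'I_d => [set a : 'I_n | Pb lab i s a]]].

Definition cB (B : {ffun 'I_r -> {ffun 'I_d -> {set 'I_n}}}) : K :=
  \prod_(i < r) comult_coef K (@ecount D i) (A0 i) (B i).
Definition FB (T : {ffun 'I_d -> {set 'I_n}}) (B : {ffun 'I_r -> {ffun 'I_d -> {set 'I_n}}}) : K :=
  cB B * \prod_(s < d) wcoef K (fun i => B i s) (T s).

Lemma stepA_t0 B : stepA t0 B = cB B.
Proof.
rewrite ffunE (bigD1 A0) //= ffunE eqxx mul1r.
rewrite [X in _ + X]big1 ?addr0 // => A HA.
by rewrite ffunE (negbTE HA) mul0r.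
Qed.

Lemma eval_rho : meval vS (rho t0) =
  \sum_(T : {ffun 'I_d -> {set 'I_n}} | [forall s, T s \in Sset]) stepB (stepA t0) T.
Proof.
rewrite /rho /stepC raddf_sum /=.
rewrite (big_mkcond (fun T : {ffun 'I_d -> {set 'I_n}} => [forall s, T s \in Sset])) /=.
apply: eq_bigr => T _.
rewrite mevalZ rmorph_prod /=.
under eq_bigr do rewrite /var mevalXU /vS enum_rankK.
case: (boolP [forall s, T s \in Sset]) => [/forallP H| /forallPn [s Hs]].
- by rewrite big1 ?mulr1 // => s _; rewrite H.
- by rewrite (bigD1 s) //= (negbTE Hs) mul0r mulr0.
Qed.


Hypothesis Hsz : all (fun l => count (fun a => a \in l) (iota 0 n) == 3%N) Sl.
Hypothesis Hcan : all (fun l => [seq a <- iota 0 n | a \in l] == l) Sl.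
Hypothesis HuS : uniq Sl.

Lemma ls_inj x y : x \in Sl -> y \in Sl -> ls x = ls y -> x = y.
Proof.
move=> xS yS E.
rewrite -(eqP (allP Hcan x xS)) -(eqP (allP Hcan y yS)).
apply: eq_in_filter => a; rewrite mem_iota0 => an.
have := congr1 (fun X : {set 'I_n} => Ordinal an \in X) E; by rewrite /ls !inE.
Qed.

Lemma nth_enum_nat m (i0 : 'I_m) i (Hi : (i < m)%N) : nth i0 (enum 'I_m) i = Ordinal Hi.
Proof. by rewrite -[i]/(val (Ordinal Hi)) nth_ord_enum. Qed.

Lemma PX_mem xs (s : 'I_d) : xs \in PX -> nth [::] xs s \in Sl.
Proof.
move=> /(prodlistP [::] xs) [Hs Hn]; have := Hn s; rewrite size_nseq ltn_ord nth_nseq ltn_ord.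
by apply.
Qed.

Lemma sum_T (M : {ffun 'I_d -> {set 'I_n}} -> K) :
  \sum_(T : {ffun 'I_d -> {set 'I_n}} | [forall s, T s \in Sset]) M T =
  \sum_(xs <- PX) M (mkT xs).
Proof.
rewrite big_mkcond (@sum_support _ _ _ (map mkT PX)) /=.
- rewrite big_map; apply: eq_big_seq => xs xsP.
  suff -> : [forall s, mkT xs s \in Sset] by [].
  by apply/forallP => s; rewrite ffunE; apply: map_f; apply: PX_mem.
- rewrite map_inj_in_uniq; first by apply: prodlist_uniq; rewrite all_nseq HuS orbT.
  move=> xs ys /(prodlistP [::] xs) [Hx1 Hx2] /(prodlistP [::] ys) [Hy1 Hy2] E.
  apply: (eq_from_nth (x0 := [::])); first by rewrite Hx1 Hy1.
  move=> i; rewrite Hx1 size_nseq => Hi.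
  have := congr1 (fun f : {ffun 'I_d -> {set 'I_n}} => f (Ordinal Hi)) E; rewrite !ffunE /= => E'.
  apply: ls_inj => //.
  + by have := Hx2 i; rewrite size_nseq nth_nseq Hi; apply.
  + by have := Hy2 i; rewrite size_nseq nth_nseq Hi; apply.
- move=> T; case: ifP => [/forallP H _|]; last by rewrite eqxx.
  apply/mapP; exists [seq nth [::] Sl (index (T s) Sset) | s <- enum 'I_d].
  + apply/(prodlistP [::]); rewrite size_map size_enum_ord size_nseq; split => // i Hi.
    rewrite (nth_map (Ordinal Hi)) ?size_enum_ord // nth_enum_nat nth_nseq Hi.
    by apply: mem_nth; rewrite -(size_map ls) index_mem.
  + apply/ffunP => s; rewrite ffunE (nth_map s) ?size_enum_ord ?ltn_ord // nth_ord_enum.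
    rewrite -(nth_map [::] (ls [::])); last by rewrite -(size_map ls) index_mem.
    by rewrite nth_index.
Qed.

Lemma M_mkT xs : xs \in PX -> stepB (stepA t0) (mkT xs) = \sum_B FB (mkT xs) B.
Proof.
move=> xsP; rewrite ffunE.
have -> : [forall s, #|mkT xs s| == 3%N].
  apply/forallP => s; rewrite (@card_bridge _ _ (fun a => a \in nth [::] xs s)).
    exact: (allP Hsz _ (PX_mem s xsP)).
  by move=> a; rewrite ffunE inE.
by apply: eq_bigr => B _; rewrite stepA_t0.
Qed.


Lemma wcoef_nz m (C : 'I_m -> {set 'I_n}) (T : {set 'I_n}) : wcoef K C T != 0 ->
  (forall j k, j != k -> [disjoint C j & C k]) /\ \bigcup_(j < m) C j = T.
Proof.
rewrite /wcoef; case: ifP => [/andP [/forallP H /eqP U] _| _]; last by rewrite eqxx.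
by split => // j k jk; exact: (implyP (forallP (H j) k) jk).
Qed.

Definition labf (B : {ffun 'I_r -> {ffun 'I_d -> {set 'I_n}}}) (i : 'I_r) (a : 'I_n) : nat :=
  if [pick s | a \in B i s] is Some s then val s else 0%N.
Definition labB B : seq (seq nat) := [seq [seq labf B i a | a <- enum 'I_n] | i <- enum 'I_r].

Lemma nth_labB B (i : 'I_r) (a : 'I_n) : nth 0%N (nth [::] (labB B) i) a = labf B i a.
Proof.
rewrite (nth_map i) ?size_enum_ord ?ltn_ord // nth_ord_enum.
by rewrite (nth_map a) ?size_enum_ord ?ltn_ord // nth_ord_enum.
Qed.

Lemma labs_uniq xs : uniq (labs xs).
Proof.
apply: prodlist_uniq; apply/allP => l /mapP [i _ ->]; apply: prodlist_uniq.
apply/allP => l' /mapP [a _ ->]; rewrite /allowed; case: ifP => _ //.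
by rewrite filter_uniq ?iota_uniq.
Qed.

Lemma labs_inj xs : {in labs xs &, injective mkB}.
Proof.
move=> l1 l2 /(prodlistP [::] l1) [S1 E1] /(prodlistP [::] l2) [S2 E2] Heq.
apply: (eq_from_nth (x0 := [::])); first by rewrite S1 S2.
move=> i; rewrite S1 size_map size_iota => Hi.
have := E1 i; have := E2 i; rewrite size_map size_iota (nth_map 0%N) ?size_iota // nth_iota // add0n.
move=> /(_ Hi) /(prodlistP 0%N) [T2 F2] /(_ Hi) /(prodlistP 0%N) [T1 F1].
apply: (eq_from_nth (x0 := 0%N)); first by rewrite T1 T2.
move=> a; rewrite T1 size_map size_iota => Ha.
have := F1 a; have := F2 a; rewrite size_map size_iota (nth_map 0%N) ?size_iota // nth_iota // add0n.
move=> /(_ Ha) G2 /(_ Ha) G1.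
move: G1 G2; rewrite /allowed; case: ifP => HaA; last by rewrite !inE => /eqP-> /eqP->.
rewrite !mem_filter !mem_iota0 => /andP [_ l1d] /andP [_ l2d].
have := congr1 (fun B : {ffun 'I_r -> {ffun 'I_d -> {set 'I_n}}} =>
                   Ordinal Ha \in B (Ordinal Hi) (Ordinal l1d)) Heq.
rewrite /= !ffunE !inE /Pb /= HaA eqxx /=.
by move=> /esym /eqP.
Qed.

Lemma supp_B xs B : FB (mkT xs) B != 0 -> B \in map mkB (labs xs).
Proof.
move=> HF.
have [Hc Hw] : (forall i, comult_coef K (@ecount D i) (A0 i) (B i) != 0) /\
               (forall s, wcoef K (fun i => B i s) (mkT xs s) != 0).
  move: HF; rewrite mulf_eq0 negb_or => /andP [/prodf_neq0 H1 /prodf_neq0 H2].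
  by split => ?; [exact: H1 | exact: H2].
have Hsz0 i s : #|B i s| = @ecount D i s.
  move: (Hc i); rewrite /comult_coef; case: ifP => [/forallP H _|]; last by rewrite eqxx.
  exact/eqP/H.
have HwA i : wcoef K (B i) (A0 i) != 0.
  by move: (Hc i); rewrite /comult_coef; case: ifP => // _; rewrite eqxx.
have HA i s a : a \in B i s -> a \in A0 i.
  by move=> Ha; have [_ <-] := wcoef_nz (HwA i); apply/bigcupP; exists s.
have Hcov i a : a \in A0 i -> exists s, a \in B i s.
  by have [_ <-] := wcoef_nz (HwA i); move=> /bigcupP [s _ Hs]; exists s.
have Hun i s s' a : a \in B i s -> a \in B i s' -> s = s'.
  move=> H1 H2; apply/eqP; apply/negPn/negP => ss.
  have [Hd _] := wcoef_nz (HwA i).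
  by have := disjointFr (Hd _ _ ss) H1; rewrite H2.
have HT i s a : a \in B i s -> a \in mkT xs s.
  by move=> Ha; have [_ <-] := wcoef_nz (Hw s); apply/bigcupP; exists i.
have Hlab i s a : (a \in B i s) = (a \in A0 i) && (labf B i a == s).
  rewrite /labf; case: pickP => [s' Hs'| Hnone].
  - apply/idP/andP.
    + by move=> Ha; split; [exact: HA Ha| rewrite (Hun _ _ _ _ Hs' Ha)].
    + by move=> [_ /eqP E]; have <- : s' = s by apply: val_inj.
  - apply/idP/andP.
    + by move=> Ha; have := Hnone s; rewrite Ha.
    + by move=> [Ha _]; have [s0 Hs0] := Hcov _ _ Ha; have := Hnone s0; rewrite Hs0.
apply/mapP; exists (labB B); last first.
  apply/ffunP => i; apply/ffunP => s; apply/setP => a.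
  by rewrite [in RHS]ffunE [in RHS]ffunE inE /Pb nth_labB Hlab /A0 ffunE inE.
rewrite /labs; apply/(prodlistP [::]); rewrite /labB !size_map -?enumT size_enum_ord size_iota; split => // i Hi.
rewrite (nth_map (Ordinal Hi)) ?size_enum_ord // nth_enum_nat.
rewrite (nth_map 0%N) ?size_iota // nth_iota // add0n.
apply/(prodlistP 0%N); rewrite !size_map -?enumT size_enum_ord size_iota; split => // a Ha.
rewrite (nth_map (Ordinal Ha)) ?size_enum_ord // nth_enum_nat.
rewrite (nth_map 0%N) ?size_iota // nth_iota // add0n.
rewrite /allowed; case: ifP => HaA.
- have HaA' : Ordinal Ha \in A0 (Ordinal Hi) by rewrite /A0 ffunE inE.
  have [s0 Hs0] := Hcov _ _ HaA'.
  have := Hs0; rewrite Hlab => /andP [_ /eqP ->].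
  rewrite mem_filter mem_iota0 ltn_ord andbT.
  have := HT _ _ _ Hs0; rewrite ffunE inE /= => ->.
  rewrite /me -[count_mem _ _]/(@ecount D (Ordinal Hi) s0) -Hsz0.
  by apply/card_gt0P; exists (Ordinal Ha).
- rewrite /labf; case: pickP => [s Hs|]; last by rewrite inE.
  by have := HA _ _ _ Hs; rewrite /A0 ffunE inE /= HaA.
Qed.

Lemma sum_B xs : \sum_B FB (mkT xs) B = \sum_(lab <- labs xs) FB (mkT xs) (mkB lab).
Proof.
rewrite (@sum_support _ _ _ (map mkB (labs xs))) ?big_map //.
- by rewrite map_inj_in_uniq ?labs_uniq //; exact: labs_inj.
- exact: supp_B.
Qed.

Lemma FB_bridge xs lab : FB (mkT xs) (mkB lab) = (zF xs lab)%:~R.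
Proof.
rewrite /FB /cB /zF intrM !prodzE !big_map -!prod_ord_iota.
congr (_ * _); apply: eq_bigr => i _.
- rewrite /comult_coef /zcom.
  have -> : [forall s, #|mkB lab i s| == @ecount D i s] =
            all (fun s => count (Pb lab i s) (iota 0 n) == me i s) (iota 0 d).
    apply/forallP/allP.
    + move=> H s; rewrite mem_iota0 => Hs; have := H (Ordinal Hs).
      by rewrite (@card_bridge _ _ (Pb lab i s)) // => a; rewrite !ffunE inE.
    + move=> H s; have := H s; rewrite mem_iota0 ltn_ord => /(_ isT).
      by rewrite (@card_bridge _ _ (Pb lab i s)) // => a; rewrite !ffunE inE.
  case: ifP => _; last by rewrite mulr0z.
  apply: wcoef_bridge => [j a|a]; first by rewrite !ffunE inE.
  by rewrite /A0 ffunE inE.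
- apply: wcoef_bridge => [j a|a]; first by rewrite !ffunE inE.
  by rewrite ffunE inE.
Qed.

Theorem eval_bridge : meval vS (rho t0) = (zsum)%:~R.
Proof.
rewrite eval_rho sum_T /zsum sumzE big_map; apply: eq_big_seq => xs xsP.
rewrite M_mkT // sum_B sumzE big_map; apply: eq_bigr => lab _.
exact: FB_bridge.
Qed.

Hypothesis Hdom : all (fun i => count (fun a => a \in nth [::] A0l i) (iota 0 n) == size (nth [::] D i))
                      (iota 0 r).

Lemma t0_dom : in_domain t0.
Proof.
move=> A; rewrite ffunE; case: (eqVneq A A0) => [-> _ i| _]; last by rewrite eqxx.
rewrite /A0 ffunE (@card_bridge _ _ (fun a => a \in nth [::] A0l i)); last by move=> a; rewrite inE.
by apply/eqP; apply: (allP Hdom); rewrite mem_iota0.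
Qed.

Lemma intr_neq0_char0 (z : int) : [pchar K] =i pred0 -> z != 0 -> (z%:~R : K) != 0.
Proof.
move=> /pcharf0P H; case: z => k Hk.
- by rewrite -pmulrn H.
- by rewrite NegzE mulrNz oppr_eq0 -pmulrn H.
Qed.

Theorem rho_nz_bridge : zsum != 0 -> [pchar K] =i pred0 -> rho_nonzero K n D.
Proof.
move=> Hz Hc; exists t0; split; first exact: t0_dom.
apply/eqP => H; have := eval_bridge; rewrite H meval0 => /esym /eqP.
by apply/negP; apply: intr_neq0_char0.
Qed.

End Main.

Unset Implicit Arguments.
Set Strict Implicit.

Theorem lemma5p3 (K : closedFieldType) (charK0 : [pchar K] =i pred0) :
  [/\ rho_nonzero K 7 D1, rho_nonzero K 8 D2,
      rho_nonzero K 9 D3 & rho_nonzero K 9 D4].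
Proof.
split.
- apply: (@rho_nz_bridge K 7 D1 [:: iota 0 7; [:: 0]; [:: 1]]%N
            [:: [:: 0;1;2]; [:: 0;3;4]; [::1;5;6]]%N); try exact: charK0; by vm_compute.
- apply: (@rho_nz_bridge K 8 D2 [:: iota 0 8; [:: 0;1;2]; [:: 3]]%N
            [:: [:: 0;4;5]; [:: 0;6;7]; [::1;2;3]]%N); try exact: charK0; by vm_compute.
- apply: (@rho_nz_bridge K 9 D3 [:: iota 0 9; [:: 0]; [:: 1]; [::2]]%N
            [:: [:: 0;1;2]; [:: 0;3;4]; [::1;5;6]; [::2;7;8]]%N); try exact: charK0; by vm_compute.
- apply: (@rho_nz_bridge K 9 D4 [:: iota 0 9; [:: 0;1;2;3]; [:: 4;5]]%N
            [:: [:: 0;3;4]; [:: 1;2;5]; [::6;7;8]]%N); try exact: charK0; by vm_compute.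
Qed.
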